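(* Let $p$ be a prime, let $j\not\equiv 0,1 \pmod p$, and let $m\geq 2$ be an integer dividing $p-1$. Suppose $a,b,c\in\mathrm{GF}(p)$ satisfy \[ (1-j)a^m+jb^m\equiv c^m \pmod p, \] where $a^m,b^m,c^m$ are non-zero and pairwise distinct modulo $p$. Let $\alpha\not\equiv 0$ and $\gamma$ be constants modulo $p$. Form a new first row from the first row of $B_{p,j}$ (whose entry in column $i$ is $ij \bmod p$) as follows: every symbol of the form $\alpha\beta^m+\gamma$ with $\beta\not\equiv 0$ (i.e. every symbol $s$ such that $(s-\gamma)/\alpha$ is a non-zero $m$th power mod $p$) is replaced by the symbol $\alpha(b/c)^m\beta^m+\gamma$; all other symbols are left unchanged. Then this new first row generates a diagonally cyclic latin square of order $p$.
   Context: Rows, columns and symbols of squares of order $n$ are indexed by $\{0,1,\dots,n-1\}$ and computed modulo $n$. A latin square with operation $\circ$ (symbol $i\circ j$ in cell $(i,j)$) of odd order $n$ is diagonally cyclic if $i\circ j=k$ implies $(i+1)\circ(j+1)=k+1$ for all cells. A first row $(r_0,\dots,r_{n-1})$ ''generates'' the $n\times n$ array whose cell $(i,k)$ contains $r_{k-i}+i \pmod n$; it generates a diagonally cyclic latin square precisely when this array is a latin square. For $j$ coprime to odd $n$ with $j\neq 1$, $B_{n,j}$ is the diagonally cyclic latin square generated by the first row with $0\circ i = ij \pmod n$. *)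

(* Defs.v *)
From HB Require Import structures.
From mathcomp Require Import all_boot all_order all_algebra.
Set Implicit Arguments. Unset Strict Implicit. Unset Printing Implicit Defensive.
Import GRing.Theory.
Local Open Scope ring_scope.

Definition latin_square (T : finType) (L : T -> T -> T) : Prop :=
  (forall i, injective (L i)) /\ (forall k, injective (fun i => L i k)).

Definition gen_array (R : zmodType) (r : R -> R) : R -> R -> R :=
  fun i k => r (k - i) + i.

Definition generates_dcls (R : finZmodType) (r : R -> R) : Prop :=
  latin_square (gen_array r).

Definition B_row (p : nat) (j : 'F_p) : 'F_p -> 'F_p := fun i => i * j.

(* The modified first row: a symbol s of the form alpha*beta^m + gamma with
   beta <> 0 is replaced by alpha*(b/c)^m*beta^m + gamma (beta^m = (s-gamma)/alpha);
   other symbols are unchanged. *)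
Definition new_row (p : nat) (j alpha gamma b c : 'F_p) (m : nat) : 'F_p -> 'F_p :=
  fun i =>
    let s := B_row j i in
    if [exists beta : 'F_p, (beta != 0) && (s == alpha * beta ^+ m + gamma)]
    then alpha * (b / c) ^+ m * ((s - gamma) / alpha) + gamma
    else s.

(* Main.v *)
Require Import Defs.
From HB Require Import structures.
From mathcomp Require Import all_boot all_order all_algebra.
Import GRing.Theory.
Local Open Scope ring_scope.

Lemma I1 (F : fieldType) (j A B C : F) : C != 0 -> (1-j)*A + j*B = C -> j*(B/C) - 1 = (j-1)*(A/C).
Proof.
move=> hC h.
have h1 : (1-j)*A = C - j*B by rewrite -h addrK.
by rewrite -[j - 1]opprB mulNr !mulrA h1 mulrBl divff // opprB.
Qed.

Lemma I2 (F : fieldType) (j a g mu k T : F) : j*mu - 1 = (j-1)*k ->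
  j*(a*mu*T + g) - (a*T + g) = (j-1)*(a*k*T+g).
Proof.
move=> h.
rewrite (mulrAC a mu) (mulrC _ mu) (mulrAC a k) (mulrC _ k).
rewrite mulrDr [in RHS]mulrDr mulrA [in RHS]mulrA -h opprD addrACA.
by rewrite !mulrBl !mul1r.
Qed.

Theorem theorem3 (p : nat) (j : 'F_p) (m : nat) (a b c alpha gamma : 'F_p) :
  prime p ->
  j != 0 -> j != 1 ->
  (2 <= m)%N -> (m %| p.-1)%N ->
  (1 - j) * a ^+ m + j * b ^+ m = c ^+ m ->
  a ^+ m != 0 -> b ^+ m != 0 -> c ^+ m != 0 ->
  a ^+ m != b ^+ m -> a ^+ m != c ^+ m -> b ^+ m != c ^+ m ->
  alpha != 0 ->
  generates_dcls (new_row j alpha gamma b c m).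
Proof.
move=> _ hj0 hj1 hm _ hyp ham hbm hcm _ _ _ hal.
have m0 : (m == 0)%N = false by move: hm; case: (m).
have nz (x : 'F_p) : x ^+ m != 0 -> x != 0.
  by move=> hx; apply: contraNneq hx => ->; rewrite expr0n m0.
have hb := nz _ hbm; have hc := nz _ hcm; have ha := nz _ ham.
set mu := (b / c) ^+ m; set k := (a / c) ^+ m.
have hmu : mu = b ^+ m / c ^+ m by rewrite /mu exprMn exprVn.
have hk : k = a ^+ m / c ^+ m by rewrite /k exprMn exprVn.
have hmuk : j * mu - 1 = (j - 1) * k by rewrite hmu hk; apply: I1.
have j1 : j - 1 != 0 by rewrite subr_eq0.
have munz : mu != 0 by rewrite hmu mulf_neq0 ?invr_eq0.
have knz : k != 0 by rewrite hk mulf_neq0 ?invr_eq0.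
pose E s := [exists beta : 'F_p, (beta != 0) && (s == alpha * beta ^+ m + gamma)].
pose f s := if E s then alpha * mu * ((s - gamma) / alpha) + gamma else s.
have Ech s : E s -> exists2 be, be != 0 & s = alpha * be ^+ m + gamma.
  by case/existsP => be /andP [h1 /eqP ->]; exists be.
have Ein be : be != 0 -> E (alpha * be ^+ m + gamma).
  by move=> h; apply/existsP; exists be; rewrite h eqxx.
have val be : alpha * mu * ((alpha * be ^+ m + gamma - gamma) / alpha) + gamma
    = alpha * mu * be ^+ m + gamma.
  by rewrite addrK (mulrC alpha (be ^+ m)) mulfK.
have mupow be : be != 0 -> E (alpha * mu * be ^+ m + gamma).
  by move=> h; rewrite -mulrA /mu -exprMn Ein // !mulf_neq0 ?invr_eq0.
have kpow be : be != 0 -> E (alpha * k * be ^+ m + gamma).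
  by move=> h; rewrite -mulrA /k -exprMn Ein // !mulf_neq0 ?invr_eq0.
have f_inj s1 s2 : f s1 = f s2 -> s1 = s2.
  rewrite /f; case E1: (E s1); case E2: (E s2) => //.
  - move: (Ech _ E1) (Ech _ E2) => [b1 hb1 ->] [b2 hb2 ->].
    by rewrite !val => /addIr /mulfI -> //; rewrite mulf_neq0.
  - move: (Ech _ E1) => [b1 hb1 ->]; rewrite val => h.
    by rewrite -h mupow in E2.
  - move: (Ech _ E2) => [b2 hb2 ->]; rewrite val => h.
    by rewrite h mupow in E1.
have key s1 s2 : j * f s1 - s1 = j * f s2 - s2 -> s1 = s2.
  have lin s : j * s - s = (j - 1) * s by rewrite mulrBl mul1r.
  rewrite /f; case E1: (E s1); case E2: (E s2).
  - move: (Ech _ E1) (Ech _ E2) => [b1 hb1 ->] [b2 hb2 ->].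
    rewrite !val !(@I2 _ _ _ _ _ _ _ hmuk) => /(mulfI j1) /addIr /mulfI -> //.
    by rewrite mulf_neq0.
  - move: (Ech _ E1) => [b1 hb1 ->]; rewrite val (@I2 _ _ _ _ _ _ _ hmuk) lin.
    by move=> /(mulfI j1) h; rewrite -h kpow in E2.
  - move: (Ech _ E2) => [b2 hb2 ->]; rewrite val (@I2 _ _ _ _ _ _ _ hmuk) lin.
    by move=> /(mulfI j1) h; rewrite h kpow in E1.
  - by rewrite !lin => /(mulfI j1).
split.
- move=> i x y; rewrite /gen_array => /addIr.
  by move=> /f_inj /(mulIf hj0) /addIr.
- move=> kk x y; rewrite /gen_array => h.
  have h2 : new_row j alpha gamma b c m (kk - x) - (kk - x)
          = new_row j alpha gamma b c m (kk - y) - (kk - y).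
    by rewrite !opprB !addrA h.
  have h3 : j * new_row j alpha gamma b c m (kk - x) - (kk - x) * j
          = j * new_row j alpha gamma b c m (kk - y) - (kk - y) * j.
    by rewrite (mulrC (kk - x)) (mulrC (kk - y)) -!mulrBr h2.
  by move: h3 => /key /(mulIf hj0) /addrI /oppr_inj.
Qed.
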